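(* For a positive integer $n$, let $m(n)$ denote the minimal integer $m$ such that there exist subsets $A_1,\ldots,A_m$ of $\{1,\ldots,4n\}$ with $|A_i|=2n$ for each $i$, such that for every subset $B\subseteq\{1,\ldots,4n\}$ with $|B|=2n$ there is at least one $i$, $1\le i\le m$, with $|A_i\cap B|=n$. Then for every prime $p>3$ we have $m(p)\ge p$. *)

(* Defs.v *)
From mathcomp Require Import all_boot.
Set Implicit Arguments. Unset Strict Implicit. Unset Printing Implicit Defensive.

(* The ground set {1,...,4n} is modelled by 'I_(4n) = {0,...,4n-1}. *)

Definition good_family (n : nat) (s : seq {set 'I_(4 * n)}) : Prop :=
  (forall A, A \in s -> #|A| = 2 * n) /\
  (forall B : {set 'I_(4 * n)}, #|B| = 2 * n ->
     exists2 A, A \in s & #|A :&: B| = n).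

Arguments good_family : clear implicits.

Definition has_good_family (n k : nat) : Prop :=
  exists s : seq {set 'I_(4 * n)}, size s = k /\ good_family n s.

Definition good_familyb (n : nat) (s : seq {set 'I_(4 * n)}) : bool :=
  all (fun A : {set 'I_(4 * n)} => #|A| == 2 * n) s &&
  [forall B : {set 'I_(4 * n)}, (#|B| == 2 * n) ==>
     has (fun A : {set 'I_(4 * n)} => #|A :&: B| == n) s].

Arguments good_familyb : clear implicits.

Lemma good_familyP n s : reflect (good_family n s) (good_familyb n s).
Proof.
apply: (iffP andP) => [[/allP h1 /forallP h2]|[h1 h2]]; split.
- by move=> A /h1 /eqP.
- move=> B hB; have := h2 B; rewrite hB eqxx /= => /hasP[A hA /eqP]; by exists A.
- by apply/allP=> A /h1 ->.
- apply/forallP=> B; apply/implyP=> /eqP /h2 [A hA hAB].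
  by apply/hasP; exists A => //; rewrite hAB.
Qed.

Definition has_good_familyb (n k : nat) : bool :=
  [exists s : k.-tuple {set 'I_(4 * n)}, good_familyb n s].

Lemma has_good_familyP n k : reflect (has_good_family n k) (has_good_familyb n k).
Proof.
apply: (iffP existsP) => [[s /good_familyP hs]|[s [hk /good_familyP hs]]].
  by exists s; rewrite size_tuple.
by subst k; exists (in_tuple s).
Qed.

Lemma exists_subset_card (T : finType) (A : {set T}) k :
  k <= #|A| -> exists2 C : {set T}, C \subset A & #|C| = k.
Proof.
move=> hk; exists [set x in take k (enum A)].
  apply/subsetP=> x; rewrite inE => /mem_take; by rewrite mem_enum.
rewrite cardsE; have /card_uniqP -> : uniq (take k (enum A)).
  exact/take_uniq/enum_uniq.
by rewrite size_takel // -cardE.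
Qed.

Lemma has_good_family_ex n : exists k, has_good_family n k.
Proof.
pose S : seq {set 'I_(4 * n)} := filter (fun A : {set 'I_(4 * n)} => #|A| == 2 * n) (enum [set: {set 'I_(4 * n)}]).
exists (size S), S; split=> //; split.
  by move=> A; rewrite mem_filter => /andP[/eqP].
move=> B hB.
have [C1 sC1 cC1] : exists2 C : {set 'I_(4 * n)}, C \subset B & #|C| = n.
  apply: (@exists_subset_card _ B n); rewrite hB; exact: leq_pmull.
have hBc : #|~: B| = 2 * n.
  by rewrite cardsCs setCK card_ord hB -mulnBl.
have [C2 sC2 cC2] : exists2 C : {set 'I_(4 * n)}, C \subset ~: B & #|C| = n.
  apply: (@exists_subset_card _ (~: B) n); rewrite hBc; exact: leq_pmull.
have dis : [disjoint C1 & C2].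
  rewrite -setI_eq0; apply/eqP/setP=> x; rewrite !inE.
  apply/negbTE/andP=> [[/(subsetP sC1) xB /(subsetP sC2)]].
  by rewrite inE xB.
exists (C1 :|: C2).
  rewrite mem_filter mem_enum in_setT andbT.
  by rewrite cardsU (disjoint_setI0 dis) cards0 subn0 cC1 cC2 mul2n addnn.
rewrite setIUl (setIidPl sC1).
have -> : C2 :&: B = set0.
  apply/setP=> x; rewrite !inE.
  apply/negbTE/andP=> [[/(subsetP sC2)]].
  by rewrite inE => /negbTE ->.
by rewrite setU0.
Qed.

Lemma has_good_familyb_ex n : exists k, has_good_familyb n k.
Proof. by have [k /has_good_familyP hk] := has_good_family_ex n; exists k. Qed.

Definition m (n : nat) : nat := ex_minn (has_good_familyb_ex n).

(* Main.v *)
Require Import Defs.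
From mathcomp Require Import all_boot all_algebra.
From mathcomp Require Import zify ring.
Set Implicit Arguments. Unset Strict Implicit. Unset Printing Implicit Defensive.
Import GRing.Theory.

Lemma card_sumb (T : finType) (A : {set T}) : #|A| = \sum_(x : T) (x \in A).
Proof. rewrite -sum1_card big_mkcond /=; apply: eq_bigr => x _; by case: (x \in A). Qed.

Lemma prod_bool (I : finType) (P : pred I) : \prod_(i : I) (P i : nat) = [forall i, P i].
Proof.
case: (boolP [forall i, P i]) => [/forallP h | /forallPn [i Hi]].
  by rewrite big1 // => i _; rewrite h.
by rewrite (bigD1 i) //= (negbTE Hi) mul0n.
Qed.

Lemma distr (I J : finType) (X : I -> {set J}) :
  \prod_(i : I) #|X i| = \sum_(f : {ffun I -> J}) [forall i, f i \in X i].
Proof.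
rewrite (eq_bigr (fun i => \sum_(j : J) (j \in X i : nat))); last by move=> i _; apply: card_sumb.
rewrite bigA_distr_bigA; apply: eq_bigr => f _; exact: prod_bool.
Qed.

Lemma sum_bool_card (T : finType) (A : {set T}) (P : pred T) :
  \sum_(x in A) (P x : nat) = #|[set x in A | P x]|.
Proof. rewrite card_sumb big_mkcond; apply: eq_bigr => x _; rewrite !inE; by case: (x \in A). Qed.

Lemma count_super (T : finType) (U : {set T}) r : r <= #|T| ->
  #|[set B : {set T} | U \subset B & #|B| == r]| = 'C(#|T| - #|U|, #|T| - r).
Proof.
move=> hr.
have -> : #|T| - #|U| = #|~: U| by rewrite -(cardsC U) addKn.
rewrite -(card_imset _ (@setC_inj T)) -cards_draws.
apply: eq_card => C; rewrite inE; apply/imsetP/andP.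
  case=> B; rewrite inE => /andP[sUB /eqP cB] ->; split; first by rewrite setCS.
  by rewrite cardsCs setCK cB.
case=> sC /eqP cC; exists (~: C); last by rewrite setCK.
by rewrite inE -setCS setCK sC /= cardsCs setCK cC subKn.
Qed.

Lemma binFp p q r : prime p -> p %| q -> r < p -> ('C(q + r, r)%:R : 'F_p)%R = 1%R.
Proof.
move=> pr pq; elim: r => [|r IH] hr; first by rewrite addn0 bin0.
have h := mul_bin_diag (q + r.+1) r; rewrite addnS /= in h.
have nz : (r.+1%:R : 'F_p)%R != 0%R by rewrite -(dvdn_pcharf (pchar_Fp pr)) gtnNdvd.
have /eqP q0 : (q%:R : 'F_p)%R == 0%R by rewrite -(dvdn_pcharf (pchar_Fp pr)).
apply: (mulfI nz); rewrite addnS -natrM -h natrM IH ?(ltnW hr) // mulr1.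
by rewrite -addnS natrD q0 add0r mulr1.
Qed.

Lemma binval p d : prime p -> d < p ->
  ('C(3 * p - d, 2 * p)%:R : 'F_p)%R = if d == 0 then 3%:R%R else 1%R.
Proof.
move=> pr hd; have p0 := prime_gt0 pr.
rewrite -bin_sub; last by lia.
have -> : 3 * p - d - 2 * p = p - d by lia.
case: d hd => [|d] hd /=.
  rewrite !subn0.
  have h := mul_bin_diag (3 * p) p.-1.
  rewrite prednK // in h.
  have e : 'C(3 * p, p) = 3 * 'C((3 * p).-1, p.-1).
    apply/eqP; rewrite -(eqn_pmul2l p0) -h; apply/eqP; ring.
  rewrite e; have -> : (3 * p).-1 = 2 * p + p.-1 by lia.
  rewrite natrM binFp ?mulr1 //; [by rewrite dvdn_mull | by rewrite prednK].
have -> : 3 * p - d.+1 = 2 * p + (p - d.+1) by lia.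
rewrite binFp //; [by rewrite dvdn_mull | lia].
Qed.

Lemma split_set (T : finType) (x0 : T) (s : seq {set T}) :
  (forall A, A \in s -> A != set0 /\ ~: A != set0) ->
  exists R : {set T}, [/\ x0 \in R, #|R| <= (size s).+1 &
     forall A, A \in s -> R :&: A != set0 /\ R :\: A != set0].
Proof.
elim: s => [|A s IH] hs.
  by exists [set x0]; split => //; [rewrite set11 | rewrite cards1].
have [R [xR cR hR]] : exists R : {set T}, [/\ x0 \in R, #|R| <= (size s).+1 &
     forall A, A \in s -> R :&: A != set0 /\ R :\: A != set0].
  by apply: IH => B hB; apply: hs; rewrite in_cons hB orbT.
have [A0 Ac0] := hs A (mem_head _ _).
have mono (R' : {set T}) : R \subset R' -> forall B, B \in s -> R' :&: B != set0 /\ R' :\: B != set0.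
  move=> sRR' B /hR [h1 h2]; split.
    by apply: (contraNneq _ h1) => e; rewrite -subset0 -e setSI.
  by apply: (contraNneq _ h2) => e; rewrite -subset0 -e setSD.
have cU (a : T) : #|a |: R| <= (size (A :: s)).+1.
  by rewrite cardsU1 /=; case: (a \notin R) => /=; lia.
case: (boolP (R :&: A == set0)) => [RA0|RAn].
  have [a aA] := set0Pn _ A0.
  exists (a |: R); split; first by rewrite !inE xR orbT.
    exact: cU.
  move=> B; rewrite in_cons => /orP [/eqP-> | hB]; last by apply: mono => //; exact: subsetUr.
  split; first by apply/set0Pn; exists a; rewrite !inE eqxx aA.
  apply/set0Pn; exists x0; rewrite !inE xR orbT andbT.
  apply/negP => x0A; move/eqP/setP: RA0 => /(_ x0); by rewrite !inE xR x0A.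
case: (boolP (R :\: A == set0)) => [RdA|RdAn].
  have [b bA] := set0Pn _ Ac0.
  exists (b |: R); split; first by rewrite !inE xR orbT.
    exact: cU.
  move=> B; rewrite in_cons => /orP [/eqP-> | hB]; last by apply: mono => //; exact: subsetUr.
  split; last by apply/set0Pn; exists b; rewrite !inE eqxx andbT; rewrite inE in bA.
  by apply: (contraNneq _ RAn) => e; rewrite -subset0 -e setSI // subsetUr.
exists R; split => //; first by apply: (leq_trans cR).
move=> B; rewrite in_cons => /orP [/eqP-> | hB]; [by split | exact: hR].
Qed.

Lemma extend (T : finType) (R : {set T}) k : #|R| <= k <= #|T| ->
  exists2 S : {set T}, R \subset S & #|S| = k.
Proof.
move=> /andP[h1 h2].
have hc : #|~: R| = #|T| - #|R| by rewrite -(cardsC R) addKn.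
have [C sC cC] := @exists_subset_card T (~: R) (#|T| - k) (ltac:(rewrite hc; lia)).
exists (~: C); first by rewrite -setCS setCK.
by rewrite cardsCs setCK cC subKn.
Qed.

Lemma main p (s : seq {set 'I_(4 * p)}) : prime p -> 2 < p -> good_family p s -> p <= size s.
Proof.
move=> pr p2 [hA hB].
have p0 := prime_gt0 pr.
rewrite leqNgt; apply/negP => ltk.
have cT : #|'I_(4 * p)| = 4 * p by rewrite card_ord.
have h4 : 0 < 4 * p by rewrite muln_gt0 p0.
pose x0 : 'I_(4 * p) := Ordinal h4.
have hs : forall A, A \in s -> A != set0 /\ ~: A != set0.
  move=> A /hA cA; split; rewrite -card_gt0; first by rewrite cA; lia.
  by rewrite cardsCs setCK cA cT; lia.
have [R [xR cR hR]] := split_set x0 hs.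
have hRp : #|R| <= p <= #|'I_(4 * p)|.
  rewrite cT; apply/andP; split; [exact: leq_trans cR ltk | lia].
have [S sRS cS] := @extend _ R p hRp.
have hS : forall A, A \in s -> 0 < #|A :&: S| < p.
  move=> A /hR [h1 h2]; apply/andP; split.
    rewrite card_gt0; apply: (contraNneq _ h1) => e.
    by rewrite -subset0 -e setIC setIS.
  rewrite -[X in _ < X]cS -(cardsID A S) setIC.
  rewrite -[X in X < _]addn0 ltn_add2l card_gt0.
  by apply: (contraNneq _ h2) => e; rewrite -subset0 -e setSD.
have [B0 _ cB0] := @exists_subset_card _ [set: 'I_(4 * p)] (2 * p) (ltac:(rewrite cardsT cT; lia)).
have k_gt0 : 0 < size s.
  have [A As _] := hB B0 cB0.
  exact: leq_ltn_trans (leq0n _) (ltac:(rewrite index_mem; exact As) : index A s < size s).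
pose F (i : 'I_(size s)) := nth set0 s i.
have FinS i : F i \in s := mem_nth set0 (ltn_ord i).
pose Bs := [set B : {set 'I_(4 * p)} | S \subset B & #|B| == 2 * p].
pose Sig := \sum_(B in Bs) \prod_(i < size s) #|F i :&: B|.
have E1 : (Sig%:R : 'F_p)%R = 0%R.
  rewrite natr_sum big1 // => B; rewrite inE => /andP[_ /eqP cB].
  have [A As cAB] := hB B cB.
  have ix : index A s < size s by rewrite index_mem.
  by rewrite natr_prod (bigD1 (Ordinal ix)) //= /F nth_index // cAB pchar_Fp_0 // mul0r.
have fsplit (f : {ffun 'I_(size s) -> 'I_(4 * p)}) (X : {set 'I_(4 * p)}) :
    [forall i, f i \in F i :&: X] = [forall i, f i \in F i] && [forall i, f i \in X].
  apply/forallP/andP => [h|[/forallP h1 /forallP h2] i]; last by rewrite inE h1 h2.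
  by split; apply/forallP => i; have := h i; rewrite inE => /andP[].
have E2 : Sig = \sum_(f : {ffun 'I_(size s) -> 'I_(4 * p)})
    [forall i, f i \in F i] * #|[set B in Bs | [forall i, f i \in B]]|.
  rewrite /Sig (eq_bigr (fun B => \sum_(f : {ffun 'I_(size s) -> 'I_(4 * p)}) [forall i, f i \in F i :&: B])); last first.
    by move=> B _; exact: distr.
  rewrite exchange_big; apply: eq_bigr => f _.
  rewrite -sum_bool_card big_distrr /=; apply: eq_bigr => B _.
  by rewrite fsplit -mulnb.
have E3 (f : {ffun 'I_(size s) -> 'I_(4 * p)}) :
    (#|[set B in Bs | [forall i, f i \in B]]|%:R : 'F_p)%R
      = (1 + 2%:R * ([forall i, f i \in S] : nat)%:R)%R.
  pose J := [set f i | i in [set: 'I_(size s)]].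
  have JX (X : {set 'I_(4 * p)}) : (J \subset X) = [forall i, f i \in X].
    apply/subsetP/forallP => [h i | h _ /imsetP [i _ ->]]; last exact: h.
    by apply: h; apply: imset_f; exact: in_setT.
  have -> : [set B in Bs | [forall i, f i \in B]] =
            [set B : {set 'I_(4 * p)} | S :|: J \subset B & #|B| == 2 * p].
    by apply/setP => B; rewrite !inE subUset JX andbAC.
  rewrite count_super; last by rewrite cT; lia.
  rewrite cT.
  have pu : p <= #|S :|: J| by rewrite -[X in X <= _]cS subset_leq_card // subsetUl.
  have uk : #|S :|: J| <= p + size s.
    rewrite cardsU cS; apply: leq_trans (leq_subr _ _) _; rewrite leq_add2l.
    by apply: leq_trans (leq_imset_card _ _) _; rewrite cardsT card_ord.
  have -> : 4 * p - #|S :|: J| = 3 * p - (#|S :|: J| - p) by lia.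
  have -> : 4 * p - 2 * p = 2 * p by lia.
  rewrite binval //; last by lia.
  have e : (#|S :|: J| <= p) = (J \subset S).
    rewrite -[X in _ <= X]cS; apply/idP/idP => [h | /setUidPl -> //].
    have : S == S :|: J by rewrite eqEcard subsetUl h.
    by move/eqP => e; rewrite e subsetUr.
  rewrite subn_eq0 e JX; case: [forall i, f i \in S] => /=.
    by rewrite mulr1 -(natrD _ 1 2).
  by rewrite mulr0 addr0.
have E4 : (Sig%:R : 'F_p)%R = ((\prod_(i < size s) #|F i|)%:R + 2%:R * (\prod_(i < size s) #|F i :&: S|)%:R)%R.
  rewrite E2 !distr !natr_sum mulr_sumr -big_split /=; apply: eq_bigr => f _.
  rewrite natrM E3 fsplit -mulnb natrM; ring.
have P0 : ((\prod_(i < size s) #|F i|)%:R : 'F_p)%R = 0%R.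
  rewrite natr_prod (bigD1 (Ordinal k_gt0)) //= (hA _ (FinS _)) natrM pchar_Fp_0 //.
  by rewrite mulr0 mul0r.
have nz : (2%:R * (\prod_(i < size s) #|F i :&: S|)%:R : 'F_p)%R != 0%R.
  rewrite -natrM -(dvdn_pcharf (pchar_Fp pr)).
  rewrite Euclid_dvdM // Euclid_dvd_prod // gtnNdvd //= big1 // => i _.
  by have /andP[h1 h2] := hS _ (FinS i); rewrite gtnNdvd.
move: E1; rewrite E4 P0 add0r => E1.
by move: nz; rewrite E1 eqxx.
Qed.

Theorem theorem2 (p : nat) : prime p -> 3 < p -> p <= m p.
Proof.
move=> pr p3; rewrite /m; case: ex_minnP => k /has_good_familyP [s [<- hs]] _.
by apply: main pr _ hs; apply: ltnW.
Qed.
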